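(* Let $\mathcal{G}$ be an ample Hausdorff groupoid and $R$ a commutative ring with unit. If the Steinberg algebra $A_R(\mathcal{G})$ is von Neumann regular, then for all units $u,v\in\mathcal{G}^{(0)}$ and every $x\in R\mathcal{G}_u^v$ there exists $y\in R\mathcal{G}_v^u$ with $xyx=x$ (product computed in the groupoid ring $R\mathcal{G}$).
   Context: A topological groupoid $\mathcal{G}$ has domain and range maps $d(x)=x^{-1}x$, $r(x)=xx^{-1}$, unit space $\mathcal{G}^{(0)}=d(\mathcal{G})$; $(x,y)$ is composable iff $d(x)=r(y)$. It is étale if $d$ is a local homeomorphism; an open bisection is an open $U\subseteq\mathcal{G}$ with $d|_U,r|_U$ homeomorphisms onto open subsets of $\mathcal{G}^{(0)}$; $\mathcal{G}$ is ample if it is étale with a basis of compact open bisections. For a commutative unital ring $R$, the Steinberg algebra $A_R(\mathcal{G})$ is the $R$-module of compactly supported locally constant (continuous, $R$ discrete) functions $\mathcal{G}\to R$, with pointwise addition and convolution $(f*g)(\gamma)=\sum_{\gamma=\alpha\beta}f(\alpha)g(\beta)$. For $u,v\in\mathcal{G}^{(0)}$, $\mathcal{G}_u^v=\{\gamma\in\mathcal{G}: d(\gamma)=u,\ r(\gamma)=v\}$. $R\mathcal{G}$ is the groupoid ring: the free $R$-module on $\mathcal{G}$ with product $g\cdot h=gh$ if $d(g)=r(h)$ and $0$ otherwise; $R\mathcal{G}_u^v\subseteq R\mathcal{G}$ is the set of finite $R$-linear combinations of elements of $\mathcal{G}_u^v$. A ring $A$ is von Neumann regular if $x\in xAx$ for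 all $x\in A$. *)

(* Defs.v *)
From HB Require Import structures.
From mathcomp Require Import all_boot all_algebra.
From Stdlib Require List.
Set Implicit Arguments. Unset Strict Implicit. Unset Printing Implicit Defensive.
Import GRing.Theory.
Local Open Scope ring_scope.

(* ---------- Abstract groupoids (Exel-style axioms, total multiplication,
   composability of (x,y) meaning d(x) = r(y) with d(x)=x^{-1}x, r(x)=xx^{-1}) *)
Record groupoid := Groupoid {
  gcar :> Type;
  ginv : gcar -> gcar;
  gmul : gcar -> gcar -> gcar;
  ginvK : forall x, ginv (ginv x) = x;
  gassoc : forall x y z,
    gmul (ginv x) x = gmul y (ginv y) -> gmul (ginv y) y = gmul z (ginv z) ->
    [/\ gmul (ginv (gmul x y)) (gmul x y) = gmul z (ginv z),
        gmul (ginv x) x = gmul (gmul y z) (ginv (gmul y z))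
      & gmul (gmul x y) z = gmul x (gmul y z)];
  gcancel : forall x y, gmul (ginv x) x = gmul y (ginv y) ->
    gmul (ginv x) (gmul x y) = y /\ gmul (gmul x y) (ginv y) = x }.

Definition dom (G : groupoid) (x : G) : G := gmul (ginv x) x.
Definition ran (G : groupoid) (x : G) : G := gmul x (ginv x).
Definition composable (G : groupoid) (x y : G) : Prop := dom x = ran y.
Definition unit_space (G : groupoid) (u : G) : Prop := exists g, u = dom g.
Definition hom_set (G : groupoid) (u v : G) (g : G) : Prop := dom g = u /\ ran g = v.

Definition is_topology (X : Type) (op : (X -> Prop) -> Prop) : Prop :=
  [/\ op (fun _ => True),
      forall U V, op U -> op V -> op (fun x => U x /\ V x)
    & forall F : (X -> Prop) -> Prop, (forall U, F U -> op U) ->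
        op (fun x => exists U, F U /\ U x)].

Definition hausdorff (X : Type) (op : (X -> Prop) -> Prop) : Prop :=
  forall x y : X, x <> y -> exists U V, [/\ op U, op V, U x, V y &
    forall z, ~ (U z /\ V z)].

Definition compact (X : Type) (op : (X -> Prop) -> Prop) (K : X -> Prop) : Prop :=
  forall F : (X -> Prop) -> Prop, (forall U, F U -> op U) ->
    (forall x, K x -> exists U, F U /\ U x) ->
    exists l : list (X -> Prop), (forall U, List.In U l -> F U) /\
      (forall x, K x -> exists U, List.In U l /\ U x).

Definition image (X Y : Type) (f : X -> Y) (V : X -> Prop) : Y -> Prop :=
  fun y => exists x, V x /\ y = f x.

(* inversion continuous; multiplication continuous on G^(2) with the
   subspace topology of the product topology *)
Definition topological_groupoid (G : groupoid) (op : (G -> Prop) -> Prop) : Prop :=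
  [/\ is_topology op,
      forall U, op U -> op (fun x => U (ginv x))
    & forall x y : G, composable x y -> forall W, op W -> W (gmul x y) ->
        exists U V, [/\ op U, op V, U x, V y &
          forall a b, U a -> V b -> composable a b -> W (gmul a b)]].

Definition open_in_units (G : groupoid) (op : (G -> Prop) -> Prop) (S : G -> Prop) : Prop :=
  exists O, op O /\ forall z, S z <-> (O z /\ unit_space z).

Definition homeo_onto_open_units (G : groupoid) (op : (G -> Prop) -> Prop)
    (f : G -> G) (U : G -> Prop) : Prop :=
  [/\ forall x y, U x -> U y -> f x = f y -> x = y,
      forall W, op W -> op (fun x => U x /\ W (f x))
    & forall V, op V -> (forall x, V x -> U x) -> open_in_units op (image f V)].

Definition etale (G : groupoid) (op : (G -> Prop) -> Prop) : Prop :=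
  topological_groupoid op /\
  forall g : G, exists U, [/\ op U, U g & homeo_onto_open_units op (@dom G) U].

Definition open_bisection (G : groupoid) (op : (G -> Prop) -> Prop) (U : G -> Prop) : Prop :=
  [/\ op U, homeo_onto_open_units op (@dom G) U & homeo_onto_open_units op (@ran G) U].

Definition ample (G : groupoid) (op : (G -> Prop) -> Prop) : Prop :=
  etale op /\
  forall (W : G -> Prop) (g : G), op W -> W g ->
    exists B, [/\ open_bisection op B, compact op B, B g & forall h, B h -> W h].

(* conv f g h  :<->  h = f * g (convolution), the sum over the decompositions
   gamma = alpha beta being finite (only terms with f alpha, g beta nonzero). *)
Definition conv (G : groupoid) (R : comPzRingType) (f g h : G -> R) : Prop :=
  forall gam : G, exists s : list (G * G),
    [/\ List.NoDup s,
        (forall p, List.In p s -> composable p.1 p.2 /\ gmul p.1 p.2 = gam),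
        (forall a b, composable a b -> gmul a b = gam -> f a != 0 -> g b != 0 ->
            List.In (a, b) s)
      & h gam = \sum_(p <- s) f p.1 * g p.2].

Definition locally_constant (X : Type) (R : Type) (op : (X -> Prop) -> Prop) (f : X -> R) : Prop :=
  forall x, exists U, [/\ op U, U x & forall y, U y -> f y = f x].

Definition compactly_supported (X : Type) (R : comPzRingType) (op : (X -> Prop) -> Prop)
    (f : X -> R) : Prop :=
  exists K, compact op K /\ forall x, f x != 0 -> K x.

Definition in_steinberg (G : groupoid) (R : comPzRingType) (op : (G -> Prop) -> Prop)
    (f : G -> R) : Prop :=
  locally_constant op f /\ compactly_supported op f.

Definition steinberg_vnr (G : groupoid) (R : comPzRingType) (op : (G -> Prop) -> Prop) : Prop :=
  forall f : G -> R, in_steinberg op f ->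
    exists g k : G -> R, [/\ in_steinberg op g, conv f g k & conv k f f].

(* elements of the groupoid ring RG are finitely supported coefficient functions
   G -> R; RG_u^v = those supported in G_u^v.  The product of RG is convolution. *)
Definition fin_supp (G : groupoid) (R : comPzRingType) (x : G -> R) : Prop :=
  exists s : list G, forall g, x g != 0 -> List.In g s.

Definition in_RG_hom (G : groupoid) (R : comPzRingType) (u v : G) (x : G -> R) : Prop :=
  fin_supp x /\ forall g, x g != 0 -> hom_set u v g.

(* Main.v *)
Require Import Defs.
From HB Require Import structures.
From mathcomp Require Import all_boot all_algebra.
From Stdlib Require Import Classical ClassicalEpsilon.
From Stdlib Require List.
Local Open Scope ring_scope.
Import GRing.Theory.

Lemma eq_big_In (R : comPzRingType) (T : Type) (s : list T) (F F' : T -> R) :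
  (forall p, List.In p s -> F p = F' p) -> \sum_(p <- s) F p = \sum_(p <- s) F' p.
Proof.
elim: s => [|a s IH] H; first by rewrite !big_nil.
rewrite !big_cons H /=; last by left.
by rewrite IH // => p Hp; apply: H; right.
Qed.

Lemma sum_zero (R : comPzRingType) (T : Type) (s : list T) (F : T -> R) :
  (forall p, List.In p s -> F p = 0) -> \sum_(p <- s) F p = 0.
Proof.
elim: s => [|a s IH] H; first by rewrite big_nil.
rewrite big_cons H /=; last by left.
by rewrite IH ?add0r // => p Hp; apply: H; right.
Qed.

Lemma sum_single (R : comPzRingType) (T : Type) (s : list T) (F : T -> R) (a : T) :
  List.NoDup s -> (forall g, List.In g s -> g <> a -> F g = 0) ->
  (List.In a s \/ F a = 0) -> \sum_(g <- s) F g = F a.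
Proof.
elim: s => [|g s IH] Hnd H Ha.
- rewrite big_nil. by case: Ha.
- rewrite big_cons. move/List.NoDup_cons_iff: Hnd => [Hnin Hnd].
  case: (classic (g = a)) => [E|Hga].
  + subst g. rewrite (@sum_zero R T s F) ?addr0 //.
    move=> p Hp; apply: H; first by right.
    by move=> E; subst p.
  + rewrite H /=; [|by left|by []]. rewrite add0r. apply: IH => //.
    * by move=> p Hp; apply: H; right.
    * case: Ha => [[E|Hin]|Hz]; [by exfalso|by left|by right].
Qed.

Lemma nodup_cover (T : Type) (s0 : list T) :
  exists s, List.NoDup s /\ forall g, List.In g s0 -> List.In g s.
Proof.
elim: s0 => [|a s0 [s [Hnd Hs]]].
- exists nil; split => //; constructor.
- case: (classic (List.In a s)) => Ha.
  + exists s; split => // g [<-|Hg] //; exact: Hs.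
  + exists (a :: s); split; first by constructor.
    move=> g [<-|Hg]; [by left|by right; apply: Hs].
Qed.

Lemma dom_mul (G : groupoid) (a b : G) : composable a b -> dom (gmul a b) = dom b.
Proof.
move=> Hab. rewrite /composable /dom /ran in Hab.
have H2 : gmul (ginv b) b = gmul (ginv b) (ginv (ginv b)) by rewrite ginvK.
case: (gassoc Hab H2) => E _ _. rewrite /dom E. by rewrite ginvK.
Qed.

Lemma ran_mul (G : groupoid) (a b : G) : composable a b -> ran (gmul a b) = ran a.
Proof.
move=> Hab. rewrite /composable /dom /ran in Hab.
have H1 : gmul (ginv (ginv a)) (ginv a) = gmul a (ginv a) by rewrite ginvK.
case: (gassoc H1 Hab) => _ E _. rewrite ginvK in E. by rewrite /ran -E.
Qed.

Arguments dom_mul {G a b}.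
Arguments ran_mul {G a b}.

Lemma compact_closed (X : Type) (op : (X -> Prop) -> Prop) (K : X -> Prop) (z : X) :
  is_topology op -> hausdorff op -> compact op K -> ~ K z ->
  exists U, [/\ op U, U z & forall w, U w -> ~ K w].
Proof.
move=> [Htop Hint _] Hh Hc Hz.
pose F := fun V : X -> Prop => op V /\ exists U, [/\ op U, U z & forall w, ~ (U w /\ V w)].
have [l [Hl Hcov]] : exists l : list (X -> Prop), (forall U, List.In U l -> F U) /\
      (forall x, K x -> exists U, List.In U l /\ U x).
  apply: Hc; first by move=> U [].
  move=> b Kb. have Hzb : z <> b by move=> E; subst; apply: Hz.
  have [U [V [HU HV Uz Vb Hd]]] := Hh z b Hzb.
  exists V; split => //; split => //; exists U; split => //.
have : exists U, [/\ op U, U z & forall w, U w -> forall V, List.In V l -> ~ V w].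
  clear Hcov. elim: l Hl => [|V l IH] Hl.
  - exists (fun _ => True); split => //.
  - have [U [HU Uz HUl]] := IH (fun W HW => Hl W (or_intror HW)).
    have [_ [U' [HU' U'z HU'd]]] := Hl V (or_introl erefl).
    exists (fun x => U x /\ U' x); split => //; first by apply: Hint.
    move=> w [Uw U'w] W [<-|HW]; first by move=> Vw; apply: (HU'd w).
    by apply: HUl.
move=> [U [HU Uz HUl]]; exists U; split => // w Uw Kw.
have [V [HV Vw]] := Hcov w Kw. by apply: (HUl w Uw V HV).
Qed.

Theorem proposition3p1 (G : groupoid) (op : (G -> Prop) -> Prop) (R : comPzRingType) :
  ample op -> hausdorff op -> steinberg_vnr R op ->
  forall u v : G, unit_space u -> unit_space v ->
  forall x : G -> R, in_RG_hom u v x ->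
    exists y : G -> R, in_RG_hom v u y /\
      exists k : G -> R, conv x y k /\ conv k x x.
Proof.
move=> Hamp Hhaus Hvnr u v _ _ x [[s0 Hs0] Hxhom].
have Htop : is_topology op by case: Hamp => [[[]]].
have HT : op (fun _ => True) by case: Htop.
have Hint : forall U V, op U -> op V -> op (fun x => U x /\ V x) by case: Htop.
have Hbis : forall g : G, exists B, [/\ open_bisection op B, compact op B & B g].
  move=> g. case: Hamp => _ Ha.
  have [B [HB1 HB2 HB3 _]] := Ha (fun _ => True) g HT I.
  by exists B.
have [Bf HBf] : exists Bf : G -> G -> Prop,
    forall g, [/\ open_bisection op (Bf g), compact op (Bf g) & Bf g g].
  exists (fun g => proj1_sig (constructive_indefinite_description _ (Hbis g))).
  move=> g; exact: proj2_sig (constructive_indefinite_description _ (Hbis g)).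
have [s [Hnd Hsub]] := @nodup_cover _ s0.
pose f := fun a : G => \sum_(g <- s) (if excluded_middle_informative (Bf g a) then x g else 0).
have Hxs : forall a, ~ List.In a s -> x a = 0.
  move=> a Hn. case: (eqVneq (x a) 0) => // Hxa. exfalso; apply: Hn; apply: Hsub; exact: Hs0.
have Hf1 : forall a, ran a = v -> f a = x a.
  move=> a Ha. rewrite /f (@sum_single R G s _ a Hnd).
  - case: (excluded_middle_informative _) => // Hn. by exfalso; apply: Hn; case: (HBf a).
  - move=> g Hg Hga. case: (excluded_middle_informative _) => // Hin.
    case: (eqVneq (x g) 0) => [//|Hxg]. exfalso; apply: Hga.
    have [_ Hrg] := Hxhom g Hxg.
    case: (HBf g) => [[_ _ [Hri _ _]] _ Hgg]. apply: Hri => //. by rewrite Hrg Ha.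
  - case: (classic (List.In a s)) => [?|Hn]; first by left. right.
    case: (excluded_middle_informative _) => ? ; [exact: Hxs | by []].
have Hf2 : forall a, dom a = u -> f a = x a.
  move=> a Ha. rewrite /f (@sum_single R G s _ a Hnd).
  - case: (excluded_middle_informative _) => // Hn. by exfalso; apply: Hn; case: (HBf a).
  - move=> g Hg Hga. case: (excluded_middle_informative _) => // Hin.
    case: (eqVneq (x g) 0) => [//|Hxg]. exfalso; apply: Hga.
    have [Hdg _] := Hxhom g Hxg.
    case: (HBf g) => [[_ [Hdi _ _] _] _ Hgg]. apply: Hdi => //. by rewrite Hdg Ha.
  - case: (classic (List.In a s)) => [?|Hn]; first by left. right.
    case: (excluded_middle_informative _) => ? ; [exact: Hxs | by []].
have Hlc : locally_constant op f.
  move=> z.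
  have Hgen : forall l : list G, exists U, [/\ op U, U z & forall w, U w ->
       forall g, List.In g l -> (Bf g w <-> Bf g z)].
    elim=> [|g l [U [HU Uz HUl]]].
    - exists (fun _ => True); split => //.
    - have [U' [HU' U'z HU'g]] : exists U', [/\ op U', U' z & forall w, U' w -> (Bf g w <-> Bf g z)].
        case: (classic (Bf g z)) => Hz.
        + exists (Bf g); split => //; by case: (HBf g) => [[]].
        + have [|U' [HU' U'z HU'K]] := @compact_closed _ op (Bf g) z Htop Hhaus _ Hz.
            by case: (HBf g).
          exists U'; split => // w Hw; split => H; [exfalso; exact: HU'K w Hw H | by exfalso; apply: Hz].
      exists (fun w => U w /\ U' w); split => //; first by apply: Hint.
      move=> w [Uw U'w] h [<-|Hh]; [exact: HU'g | exact: HUl].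
  have [U [HU Uz HUl]] := Hgen s.
  exists U; split => // w Hw. rewrite /f. apply: eq_big_In => g Hg.
  have [H1 H2] := HUl w Hw g Hg.
  case: (excluded_middle_informative _) => Hw'; case: (excluded_middle_informative _) => Hz' //.
  + by exfalso; apply: Hz'; apply: H1.
  + by exfalso; apply: Hw'; apply: H2.
have Hcs : compactly_supported op f.
  exists (fun z => exists g, List.In g s /\ Bf g z); split.
  - elim: (s) => [|g l IH] F HF Hcov.
    + exists nil; split => // z [g [[] _]].
    + have [l1 [Hl1 Hc1]] : exists l1 : list (G -> Prop), (forall U, List.In U l1 -> F U) /\
         (forall x, Bf g x -> exists U, List.In U l1 /\ U x).
        case: (HBf g) => _ Hc _. apply: Hc => // z Hz. apply: Hcov. exists g; split => //; by left.
      have [l2 [Hl2 Hc2]] : exists l2 : list (G -> Prop), (forall U, List.In U l2 -> F U) /\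
         (forall x, (exists g, List.In g l /\ Bf g x) -> exists U, List.In U l2 /\ U x).
        apply: IH => // z [g' [Hin Hz]]; apply: Hcov; exists g'; split => //; by right.
      exists (l1 ++ l2); split.
      * move=> U HU; case: (List.in_app_or _ _ _ HU) => ?; [exact: Hl1|exact: Hl2].
      * move=> z [g' [[<-|Hin] Hz]].
        -- have [U [HU Uz]] := Hc1 z Hz. exists U; split => //; apply: List.in_or_app; by left.
        -- have [U [HU Uz]] := Hc2 z (ex_intro _ g' (conj Hin Hz)).
           exists U; split => //; apply: List.in_or_app; by right.
  - move=> z Hz. apply: NNPP => Hn. move/eqP: Hz; apply. rewrite /f. apply: sum_zero => g Hg.
    case: (excluded_middle_informative _) => // Hb. exfalso; apply: Hn; by exists g.
have [h [k1 [[_ [K [HK HKh]]] Hc1 Hc2]]] := Hvnr f (conj Hlc Hcs).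
pose y := fun b => if excluded_middle_informative (hom_set v u b) then h b else 0.
pose k := fun c => if excluded_middle_informative (hom_set v v c) then k1 c else 0.
exists y; split.
  split.
  - pose Fd := fun U : G -> Prop => op U /\ forall a b, U a -> U b -> dom a = dom b -> a = b.
    have [l [Hl Hlc']] : exists l : list (G -> Prop), (forall U, List.In U l -> Fd U) /\
         (forall x, K x -> exists U, List.In U l /\ U x).
      apply: HK; first by move=> U [].
      move=> z _. have [B [[HB [Hdi _ _] _] _ Bz]] := Hbis z.
      exists B; split => //; split => //.
    have Hgen : forall l : list (G -> Prop), (forall U, List.In U l -> Fd U) ->
        exists s, forall g, dom g = v -> (exists U, List.In U l /\ U g) -> List.In g s.
      elim=> [|U l' IH] Hl'.
      + exists nil => g _ [U [[] _]].
      + have [s' Hs'] := IH (fun W HW => Hl' W (or_intror HW)).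
        have [_ HUi] := Hl' U (or_introl erefl).
        case: (classic (exists g0, dom g0 = v /\ U g0)) => [[g0 [Hg0 Ug0]]|Hn].
        * exists (g0 :: s') => g Hg [W [[<-|HW] Wg]].
          -- left. apply: HUi => //. by rewrite Hg Hg0.
          -- right. apply: Hs' => //. by exists W.
        * exists s' => g Hg [W [[<-|HW] Wg]].
          -- exfalso; apply: Hn; by exists g.
          -- apply: Hs' => //. by exists W.
    have [s1 Hs1] := Hgen l Hl.
    exists s1 => g. rewrite /y. case: (excluded_middle_informative _) => [[Hd ?] Hh|?]; last by rewrite eqxx.
    apply: Hs1 => //. exact: Hlc' _ (HKh _ Hh).
  - move=> g. rewrite /y. case: (excluded_middle_informative _) => [? ? //|?]. by rewrite eqxx.
exists k; split.
- move=> c. case: (classic (hom_set v v c)) => Hc.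
  + have [s1 [Hnd1 Hs1 Hall1 Hsum1]] := Hc1 c. exists s1; split => //.
    * move=> a b Hab Habc Hxa Hyb. apply: Hall1 => //.
      -- have [_ Hra] := Hxhom a Hxa. by rewrite Hf1.
      -- move: Hyb; rewrite /y; case: (excluded_middle_informative _) => // ?; by rewrite eqxx.
    * rewrite /k; case: (excluded_middle_informative _) => // ?. rewrite Hsum1.
      apply: eq_big_In => -[a b] Hp /=. have [/= Hcomp Hprod] := Hs1 _ Hp.
      have Hra : ran a = v by rewrite -(ran_mul Hcomp) Hprod; case: Hc.
      rewrite Hf1 //. case: (eqVneq (x a) 0) => [->|Hxa]; first by rewrite !mul0r.
      have [Hda _] := Hxhom a Hxa.
      rewrite /y; case: (excluded_middle_informative _) => // Hn; exfalso; apply: Hn; split.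
      -- rewrite -(dom_mul Hcomp) Hprod; by case: Hc.
      -- by rewrite -Hcomp.
  + exists nil; split => //; first by constructor.
    * move=> a b Hab Habc Hxa Hyb. exfalso; apply: Hc.
      have [_ Hra] := Hxhom a Hxa.
      move: Hyb; rewrite /y; case: (excluded_middle_informative _) => [[Hdb ?] ?|?]; last by rewrite eqxx.
      split; rewrite -Habc; [by rewrite dom_mul|by rewrite ran_mul].
    * rewrite /k big_nil; case: (excluded_middle_informative _) => //.
- move=> c. case: (classic (hom_set u v c)) => Hc.
  + have [s2 [Hnd2 Hs2 Hall2 Hsum2]] := Hc2 c. exists s2; split => //.
    * move=> a b Hab Habc Hka Hxb. apply: Hall2 => //.
      -- move: Hka; rewrite /k; case: (excluded_middle_informative _) => // ?; by rewrite eqxx.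
      -- have [Hdb _] := Hxhom b Hxb. by rewrite Hf2.
    * have <- : f c = x c by apply: Hf2; case: Hc.
      rewrite Hsum2.
      apply: eq_big_In => -[a b] Hp /=. have [/= Hcomp Hprod] := Hs2 _ Hp.
      have Hdb : dom b = u by rewrite -(dom_mul Hcomp) Hprod; case: Hc.
      rewrite Hf2 //. case: (eqVneq (x b) 0) => [->|Hxb]; first by rewrite !mulr0.
      have [_ Hrb] := Hxhom b Hxb.
      rewrite /k; case: (excluded_middle_informative _) => // Hn; exfalso; apply: Hn; split.
      -- by rewrite Hcomp.
      -- rewrite -(ran_mul Hcomp) Hprod; by case: Hc.
  + exists nil; split => //; first by constructor.
    * move=> a b Hab Habc Hka Hxb. exfalso; apply: Hc.
      have [Hdb _] := Hxhom b Hxb.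
      move: Hka; rewrite /k; case: (excluded_middle_informative _) => [[? Hra] ?|?]; last by rewrite eqxx.
      split; rewrite -Habc; [by rewrite dom_mul|by rewrite ran_mul].
    * rewrite big_nil. case: (eqVneq (x c) 0) => // Hxc. by exfalso; apply: Hc; apply: Hxhom.
Qed.
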